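(* Let $D$ be a derivation acting on monomials $x^\lambda y^\mu$ ($\lambda,\mu\in\mathbb C$) in two indeterminates $x,y$ and their linear combinations, satisfying Leibniz's rule and $D(x^\lambda y^\mu)=x^\lambda y^\mu\bigl(\lambda x^{-1}Dx+\mu y^{-1}Dy\bigr)$. Suppose $Dx=x^{1+\alpha}y^{\alpha'}$ and $Dy=x^{\alpha+\beta}y^{1+\alpha'+\beta'}$. Then for all $n\ge0$ and all $\gamma,\gamma'\in\mathbb C$, $$D^n\bigl(x^\gamma y^{\gamma'}\bigr)=x^\gamma y^{\gamma'}\,\bigl(x^\alpha y^{\alpha'}\bigr)^n\sum_{k=0}^n\left[\begin{array}{cc|c}\alpha,&\beta&\gamma\\ \alpha',&\beta'&\gamma'\end{array}\right]_{n,k}\bigl(x^\beta y^{\beta'}\bigr)^k,$$ i.e. $D^n(x^\gamma y^{\gamma'})=x^\gamma y^{\gamma'}(x^\alpha y^{\alpha'})^nG_n(x^\beta y^{\beta'})$ where $G_n$ is the $n$th row polynomial of this GKP triangle.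
   Context: GKP triangle: for complex parameters $\alpha,\beta,\gamma,\alpha',\beta',\gamma'$, the array $T_{n,k}=\left[\begin{array}{cc|c}\alpha,&\beta&\gamma\\ \alpha',&\beta'&\gamma'\end{array}\right]_{n,k}$ is defined by $T_{0,0}=1$, $T_{n,k}=0$ if $n<0$, $k<0$ or $k>n$, and $T_{n+1,k+1}=[\alpha n+\beta(k+1)+\gamma]T_{n,k+1}+[\alpha' n+\beta' k+\gamma']T_{n,k}$ for $n\ge0$, $k\in\mathbb Z$; its $n$th row polynomial is $G_n(t)=\sum_{k=0}^nT_{n,k}t^k$. *)

(* Defs.v *)
From HB Require Import structures.
From mathcomp Require Import all_boot all_order all_algebra.
Set Implicit Arguments. Unset Strict Implicit. Unset Printing Implicit Defensive.
Import Order.TTheory GRing.Theory Num.Theory.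
Local Open Scope ring_scope.

Fixpoint gkp {C : numClosedFieldType} (a b g a' b' g' : C) (n : nat) : nat -> C :=
  match n with
  | 0%N => fun k => if k == 0%N then 1 else 0
  | n'.+1 => fun k =>
      (a * n'%:R + b * k%:R + g) * gkp a b g a' b' g' n' k
      + (if k is k'.+1 then (a' * n'%:R + b' * k'%:R + g') * gkp a b g a' b' g' n' k'
         else 0)
  end.

(* Main.v *)
Require Import Defs.
From HB Require Import structures.
From mathcomp Require Import all_boot all_order all_algebra.
From mathcomp Require Import ring.
Import Order.TTheory GRing.Theory Num.Theory.
Local Open Scope ring_scope.

Lemma gkp_gt (C : numClosedFieldType) (a b g a' b' g' : C) n k :
  (n < k)%N -> gkp a b g a' b' g' n k = 0.
Proof.
elim: n k => [|n IH] [|k] //= H.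
rewrite IH ?(ltnW H) // mulr0 add0r.
case: k H => [|k] H //. by rewrite IH // mulr0.
Qed.

Theorem mainTheorem19 (C : numClosedFieldType) (A : comAlgType C)
    (mon : C -> C -> A)
    (mon0 : mon 0 0 = 1)
    (monM : forall l m l' m', mon l m * mon l' m' = mon (l + l') (m + m'))
    (D : A -> A)
    (D_add : forall u v, D (u + v) = D u + D v)
    (D_scale : forall (c : C) u, D (c *: u) = c *: D u)
    (D_leibniz : forall u v, D (u * v) = D u * v + u * D v)
    (D_mon : forall l m, D (mon l m) =
        mon l m * (l *: (mon (-1) 0 * D (mon 1 0)) + m *: (mon 0 (-1) * D (mon 0 1))))
    (a b a' b' : C)
    (Dx : D (mon 1 0) = mon (1 + a) a')
    (Dy : D (mon 0 1) = mon (a + b) (1 + a' + b'))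
    (n : nat) (g g' : C) :
  iter n D (mon g g') =
    mon g g' * (mon a a') ^+ n *
      \sum_(k < n.+1) gkp a b g a' b' g' n k *: (mon b b') ^+ k.
Proof.
have D0 : D 0 = 0 by have := D_scale 0 0; rewrite !scale0r.
have D_sum : forall m (F : 'I_m -> A), D (\sum_(i < m) F i) = \sum_(i < m) D (F i).
  by move=> m F; exact: (big_morph D D_add D0).
have monX : forall l m k, mon l m ^+ k = mon (l * k%:R) (m * k%:R).
  move=> l m; elim=> [|k IH]; first by rewrite expr0 !mulr0 mon0.
  by rewrite exprS IH monM; congr mon; rewrite mulrS; ring.
have Dmon : forall l m, D (mon l m) =
    l *: mon (l + a) (m + a') + m *: mon (l + (a + b)) (m + (a' + b')).
  move=> l m; rewrite D_mon Dx Dy !monM mulrDr -!scalerAr !monM.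
  by congr (_ *: mon _ _ + _ *: mon _ _); ring.
pose M (n k : nat) := mon (a * n%:R + b * k%:R + g) (a' * n%:R + b' * k%:R + g').
have DM : forall n k, D (M n k) = (a * n%:R + b * k%:R + g) *: M n.+1 k
    + (a' * n%:R + b' * k%:R + g') *: M n.+1 k.+1.
  move=> m k; rewrite /M Dmon; congr (_ *: mon _ _ + _ *: mon _ _);
  rewrite ?mulrS; ring.
have P : forall n, iter n D (mon g g') = \sum_(k < n.+1) gkp a b g a' b' g' n k *: M n k.
  elim=> [|m IH].
    rewrite big_ord1 /= scale1r /M; congr mon; ring.
  rewrite iterS IH D_sum.
  under eq_bigr do rewrite D_scale DM scalerDr !scalerA.
  rewrite big_split /=.
  transitivity (\sum_(k < m.+2) ((a * m%:R + b * k%:R + g) * gkp a b g a' b' g' m k) *: M m.+1 k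
    + \sum_(k < m.+2) (if nat_of_ord k is k'.+1 then (a' * m%:R + b' * k'%:R + g') * gkp a b g a' b' g' m k' else 0) *: M m.+1 k); last first.
    rewrite -big_split; apply: eq_bigr => k _; by rewrite scalerDl.
  rewrite [X in _ = X + _]big_ord_recr /= gkp_gt // mulr0 scale0r addr0.
  rewrite [X in _ = _ + X]big_ord_recl /= scale0r add0r.
  congr (_ + _); apply: eq_bigr => k _; by rewrite mulrC.
rewrite P mulr_sumr; apply: eq_bigr => k _.
rewrite -scalerAr /M !monX !monM; congr (_ *: mon _ _); ring.
Qed.
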